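(* For every positive integer $k$, the maximum cardinality of an avoidable subset of $\overline{S_k}$ is $k!-k$.
   Context: For $\sigma\in S_n$, the cyclic permutation $[\sigma]$ is the set of all rotations of $\sigma$. For $\pi\in S_k$, the totally vincular pattern $\overline{\pi}$ is $\pi$ with all adjacent positions overlined; a cyclic permutation $[\sigma]$ of length $n\ge k$ contains $\overline{\pi}$ if some $k$ cyclically consecutive entries of $\sigma$ are order-isomorphic to $\pi$. $\overline{S_k}$ is the set of totally vincular patterns of length $k$. For $\Pi\subseteq\overline{S_k}$, $\mathrm{Av}_n[\Pi]$ is the set of cyclic permutations of length $n$ containing no pattern of $\Pi$. $\Pi$ is unavoidable if $|\mathrm{Av}_n[\Pi]|=0$ for all sufficiently large $n$, and avoidable otherwise (i.e. $|\mathrm{Av}_n[\Pi]|>0$ for arbitrarily large $n$). *)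

(* Defs.v *)
From mathcomp Require Import all_boot all_order all_fingroup.
Set Implicit Arguments. Unset Strict Implicit. Unset Printing Implicit Defensive.

(* A permutation sigma in S_n is a {perm 'I_n}; its entries are read as the
   values 0..n-1.  [pval sigma i] is the entry at position (i mod n). *)
Definition pval (n : nat) (sigma : {perm 'I_n}) (i : nat) : nat :=
  oapp (fun j : 'I_n => val (sigma j)) 0 (insub (i %% n)).

Definition rotclass (n : nat) (sigma : {perm 'I_n}) : {set {perm 'I_n}} :=
  [set tau : {perm 'I_n} |
    [exists r : 'I_n, [forall j : 'I_n, pval tau j == pval sigma (j + r)]]].

(* [sigma] contains the totally vincular pattern \overline{pi} (pi in S_k):
   n >= k and some k cyclically consecutive entries of sigma are
   order-isomorphic to pi. (Independent of the representative sigma.) *)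
Definition ccontains (k n : nat) (pi : {perm 'I_k}) (sigma : {perm 'I_n}) : bool :=
  (k <= n) &&
  [exists i : 'I_n, [forall a : 'I_k, [forall b : 'I_k,
      (pval sigma (i + a) < pval sigma (i + b)) == (val (pi a) < val (pi b))]]].

Definition Av (k n : nat) (Pi : {set {perm 'I_k}}) : {set {set {perm 'I_n}}} :=
  [set rotclass sigma | sigma in
     [set sigma : {perm 'I_n} | [forall pi in Pi, ~~ ccontains pi sigma]]].

Definition avoidable (k : nat) (Pi : {set {perm 'I_k}}) : Prop :=
  forall N : nat, exists2 n : nat, N <= n & 0 < #|Av n Pi|.

(* Main.v *)
Require Import Defs.
From mathcomp Require Import all_boot all_order all_fingroup.
From mathcomp Require Import zify.

Lemma card_lt_ord k m : m <= k -> #|[set c : 'I_k | c < m]| = m.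
Proof.
move=> mk.
have -> : [set c : 'I_k | c < m] = [set widen_ord mk x | x : 'I_m].
  apply/setP=> c; rewrite inE; apply/idP/imsetP.
    move=> cm; exists (Ordinal cm) => //; exact: val_inj.
  by case=> x _ ->; rewrite /= ltn_ord.
rewrite card_imset ?card_ord //.
by move=> x y /(congr1 val) /= /val_inj.
Qed.

Lemma rank_perm k (pi : {perm 'I_k}) a :
  #|[set b | pi b < pi a]| = pi a.
Proof.
have -> : [set b | pi b < pi a] = pi @^-1: [set c : 'I_k | c < pi a].
  by apply/setP=> b; rewrite !inE.
by rewrite card_preimset ?card_lt_ord //; [apply: ltnW | apply: perm_inj].
Qed.

Lemma rigid k (pi tau : {perm 'I_k}) :
  (forall a b, (pi a < pi b) = (tau a < tau b)) -> pi = tau.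
Proof.
move=> H; apply/permP=> a; apply: val_inj.
rewrite /= -(rank_perm _ pi a) -(rank_perm _ tau a); apply: eq_card => b.
by rewrite !inE H.
Qed.

Lemma std k (w : 'I_k -> nat) : injective w ->
  exists pi : {perm 'I_k}, forall a b, (w a < w b) = (pi a < pi b).
Proof.
move=> winj.
pose r a := #|[set b | w b < w a]|.
have rlt a : r a < k.
  have <- : #|[set: 'I_k]| = k by rewrite cardsT card_ord.
  apply: proper_card; apply/properP; split.
    by apply/subsetP.
  by exists a; rewrite ?inE ?ltnn.
have mono a b : w a < w b -> r a < r b.
  move=> ab; apply: proper_card; apply/properP; split.
    apply/subsetP=> c; rewrite !inE => ca; exact: ltn_trans ca ab.
  by exists a; rewrite !inE ?ltnn.
have tri a b : a != b -> (w a < w b) || (w b < w a).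
  move=> ne; case: (ltngtP (w a) (w b)) => // /winj e; by rewrite e eqxx in ne.
pose f a : 'I_k := Ordinal (rlt a).
have finj : injective f.
  move=> a b /(congr1 val) /= e; apply/eqP; apply/negPn/negP=> ne.
  by case/orP: (tri a b ne) => /mono; rewrite e ltnn.
exists (perm finj) => a b; rewrite !permE /=.
apply/idP/idP; first exact: mono.
move=> rab; have ne : a != b by apply/negP=> /eqP e; rewrite e ltnn in rab.
case/orP: (tri a b ne) => // /mono rba.
by have := ltn_trans rab rba; rewrite ltnn.
Qed.

Lemma pvalOrd n (sigma : {perm 'I_n}) i (H : i %% n < n) :
  Defs.pval sigma i = val (sigma (Ordinal H)).
Proof. by rewrite /Defs.pval (insubT (fun x => x < n) H) /=; congr (val (sigma _)); apply: val_inj. Qed.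

Lemma mod2 x n : x < n + n -> x %% n = if x < n then x else x - n.
Proof.
move=> h; case: ifP => xn; first by rewrite modn_small.
have nx : n <= x by rewrite leqNgt xn.
rewrite -{1}(subnK nx) modnDr modn_small //; lia.
Qed.

Definition rotf k (hk : 0 < k) (r : 'I_k) (a : 'I_k) : 'I_k :=
  Ordinal (ltn_pmod (a + r) hk).

Lemma rotf_inj k hk r : injective (@rotf k hk r).
Proof.
move=> a b /(congr1 val) /= /eqP; rewrite eqn_modDr !modn_small // => /eqP e.
exact: val_inj.
Qed.

Definition rotp k hk r : {perm 'I_k} := perm (@rotf_inj k hk r).

Lemma rotp_inj k hk : injective (@rotp k hk).
Proof.
move=> r s /(congr1 (fun p : {perm 'I_k} => val (p (Ordinal hk)))).
rewrite !permE /= !add0n !modn_small // => e; exact: val_inj.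
Qed.

Lemma lower k (hk : 0 < k) n (pi : {perm 'I_k}) :
  ccontains pi (1 : {perm 'I_n}) -> exists r, pi = rotp k hk r.
Proof.
case/andP=> kn /existsP [i /forallP H].
have n0 : 0 < n by apply: leq_trans hk kn.
have pv x : Defs.pval (1 : {perm 'I_n}) x = x %% n.
  by rewrite (pvalOrd _ _ _ (ltn_pmod x n0)) perm1.
have rlt : (if i + k <= n then 0 else i + k - n) < k.
  by case: ifP => _ //; have := ltn_ord i; lia.
exists (Ordinal rlt); apply: rigid => a b.
have := H a => /forallP /(_ b) /eqP <-.
rewrite !permE /= !pv.
have ia := ltn_ord a; have ib := ltn_ord b; have ii := ltn_ord i.
have hr : (i + k <= n /\ (if i + k <= n then 0 else i + k - n) = 0) \/
  (n < i + k /\ (if i + k <= n then 0 else i + k - n) = i + k - n).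
  by case: ifP => h; [left | right]; split => //; rewrite ltnNge h.
move: hr rlt; set r := (if _ then _ else _) => hr rlt.
rewrite (mod2 (i + a) n) ?(mod2 (i + b) n) ?(mod2 (a + r) k) ?(mod2 (b + r) k); try lia.
case: ifP => ?; case: ifP => ?; case: ifP => ?; case: ifP => ?;
  apply/idP/idP; lia.

Qed.

Lemma upper k n (Pi : {set {perm 'I_k}}) (sigma : {perm 'I_n}) :
  0 < k -> k <= n -> [forall pi in Pi, ~~ ccontains pi sigma] -> k <= #|~: Pi|.
Proof.
case: k Pi => // k' Pi _ kn Hs.
have n0 : 0 < n by apply: leq_trans kn.
case: n sigma kn Hs n0 => // n' sigma kn Hs _.
set k := k'.+1 in Pi Hs kn *.
set n := n'.+1 in sigma Hs kn *.
have n0 : 0 < n by [].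
pose p := (sigma^-1)%g ord_max.
have sp : sigma p = ord_max by rewrite /p permKV.
pose h (pi : {perm 'I_k}) := (pi^-1)%g ord_max.
suff allj : forall j, j \in h @: ~: Pi.
  have : #|[set: 'I_k]| <= #|h @: ~: Pi|.
    by apply: subset_leq_card; apply/subsetP => j _; exact: allj.
  rewrite cardsT card_ord => /leq_trans; apply; exact: leq_imset_card.
move=> j.
pose i : 'I_n := Ordinal (ltn_pmod (p + n - j) n0).
pose w (a : 'I_k) := Defs.pval sigma (i + a).
have wE a : w a = val (sigma (Ordinal (ltn_pmod (i + a) n0))).
  exact: pvalOrd.
have jn : j < n by apply: leq_trans (ltn_ord j) kn.
have winj : injective w.
  move=> a b; rewrite !wE => /val_inj /perm_inj /(congr1 val) /= /eqP.
  rewrite eqn_modDl !modn_small => [/eqP e||]; first exact: val_inj.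
    exact: leq_trans (ltn_ord b) kn.
  exact: leq_trans (ltn_ord a) kn.
have wj : w j = n'.
  rewrite wE.
  have -> : Ordinal (ltn_pmod (i + j) n0) = p.
    apply: val_inj => /=; rewrite modnDml subnK; last by lia.
    by rewrite modnDr modn_small.
  by rewrite sp.
have wle a : w a <= n' by rewrite wE -ltnS ltn_ord.
have [pi Hpi] := std k w winj.
apply/imsetP; exists pi.
  rewrite inE; apply/negP => piP.
  move/forallP: Hs => /(_ pi); rewrite piP /= => /negP; apply.
  rewrite /ccontains kn /=; apply/existsP; exists i.
  by apply/forallP => a; apply/forallP => b; rewrite -Hpi.
have pij : pi j = ord_max.
  case: (eqVneq ((pi^-1)%g ord_max) j) => [<-|ne]; first by rewrite permKV.
  have : w ((pi^-1)%g ord_max) < w j.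
    rewrite ltn_neqAle wj wle andbT; apply/negP => /eqP e.
    by move: ne; rewrite -wj in e; rewrite (winj _ _ e) eqxx.
  by rewrite Hpi permKV ltnNge leq_ord.
by rewrite /h -pij permK.
Qed.

Theorem theorem7p1 (k : nat) (hk : 0 < k) :
  (exists Pi : {set {perm 'I_k}}, avoidable Pi /\ #|Pi| = k`! - k) /\
  (forall Pi : {set {perm 'I_k}}, avoidable Pi -> #|Pi| <= k`! - k).
Proof.
split.
  exists (~: [set rotp k hk r | r : 'I_k]); split.
    move=> N; exists (N + k); first exact: leq_addr.
    apply/card_gt0P; exists (rotclass (1 : {perm 'I_(N + k)})%g).
    apply: imset_f; rewrite inE; apply/forallP => pi; apply/implyP => piP.
    apply/negP => /lower [r e].
    by move: piP; rewrite inE e imset_f.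
  have := cardsC [set rotp k hk r | r : 'I_k].
  rewrite card_imset ?card_ord ?card_Sn; last exact: rotp_inj.
  by move=> <-; rewrite addKn.
move=> Pi /(_ k) [n kn /card_gt0P [X /imsetP [sigma]]].
rewrite inE => Hs _.
have := upper _ _ Pi sigma hk kn Hs.
have := cardsC Pi; rewrite card_Sn => <- h.
by rewrite -addnBA // leq_addr.
Qed.
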